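(* Let $\mathcal A,\mathcal B,\mathcal C$ be abelian categories and let $(\mathcal B,\mathcal A,\mathcal C, i^*, i_*, i^!, j_!, j^*, j_* )$ be a recollement of abelian categories, where $i^*,i^!:\mathcal A\to\mathcal B$, $i_*:\mathcal B\to\mathcal A$, $j^*:\mathcal A\to\mathcal C$ and $j_!,j_*:\mathcal C\to\mathcal A$. If $i^*$ and $i^!$ are exact functors, then $i^*\cong i^!$, $j_!\cong j_*$, and $\mathcal A\cong\mathcal B\oplus\mathcal C$ as categories.
   Context: A recollement $(\mathcal B,\mathcal A,\mathcal C, i^*, i_*, i^!, j_!, j^*, j_* )$ of abelian categories consists of functors $i^*,i^!:\mathcal A\to\mathcal B$, $i_*:\mathcal B\to\mathcal A$, $j^*:\mathcal A\to\mathcal C$, $j_!,j_*:\mathcal C\to\mathcal A$ such that: (i) $(i^*,i_* )$, $(i_*,i^!)$, $(j_!,j^* )$, $(j^*,j_* )$ are adjoint pairs (left adjoint written first); (ii) $i_*$, $j_!$, $j_*$ are fully faithful; (iii) $\mathrm{Im}\, i_*=\mathrm{Ker}\, j^*$, where $\mathrm{Im}\, i_*$ is the full subcategory of objects isomorphic to some $i_*B$ and $\mathrm{Ker}\, j^*$ is the full subcategory of objects $A$ with $j^*A=0$. *)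

(* Defs.v *)
From HB Require Import structures.
From mathcomp Require Import all_boot all_algebra.
Set Implicit Arguments. Unset Strict Implicit. Unset Printing Implicit Defensive.
Import GRing.Theory.
Local Open Scope ring_scope.

(* A preadditive (Ab-enriched) category: hom-sets are abelian groups and
   composition is biadditive.  [comp g f] is "g after f". *)
Record PreAdditiveCat := {
  Ob :> Type;
  Hom : Ob -> Ob -> zmodType;
  idm : forall a, Hom a a;
  comp : forall a b c, Hom b c -> Hom a b -> Hom a c;
  compA : forall a b c d (h : Hom c d) (g : Hom b c) (f : Hom a b),
      comp h (comp g f) = comp (comp h g) f;
  comp1m : forall a b (f : Hom a b), comp (idm b) f = f;
  compm1 : forall a b (f : Hom a b), comp f (idm a) = f;
  compDl : forall a b c (g g' : Hom b c) (f : Hom a b),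
      comp (g + g') f = comp g f + comp g' f;
  compDr : forall a b c (g : Hom b c) (f f' : Hom a b),
      comp g (f + f') = comp g f + comp g f'
}.
Arguments Hom {C} a b : rename.
Arguments idm {C} a : rename.
Arguments comp {C a b c} g f : rename.

Section CatDefs.
Variable C : PreAdditiveCat.

Definition is_zero_obj (z : C) : Prop :=
  forall a : C, (forall f g : Hom a z, f = g) /\ (forall f g : Hom z a, f = g).

Definition is_biproduct (a b p : C) (i1 : Hom a p) (i2 : Hom b p)
  (p1 : Hom p a) (p2 : Hom p b) : Prop :=
  [/\ comp p1 i1 = idm a, comp p2 i2 = idm b, comp p1 i2 = 0,
      comp p2 i1 = 0 & comp i1 p1 + comp i2 p2 = idm p].

Definition is_kernel (a b k : C) (f : Hom a b) (m : Hom k a) : Prop :=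
  comp f m = 0 /\
  forall (x : C) (g : Hom x a), comp f g = 0 -> exists! h : Hom x k, comp m h = g.

Definition is_cokernel (a b c : C) (f : Hom a b) (e : Hom b c) : Prop :=
  comp e f = 0 /\
  forall (x : C) (g : Hom b x), comp g f = 0 -> exists! h : Hom c x, comp h e = g.

Definition is_mono (a b : C) (f : Hom a b) : Prop :=
  forall (x : C) (g h : Hom x a), comp f g = comp f h -> g = h.

Definition is_epi (a b : C) (f : Hom a b) : Prop :=
  forall (x : C) (g h : Hom b x), comp g f = comp h f -> g = h.

Definition is_abelian : Prop :=
  [/\ (exists z : C, is_zero_obj z),
      (forall a b : C, exists (p : C) (i1 : Hom a p) (i2 : Hom b p)
                             (p1 : Hom p a) (p2 : Hom p b), is_biproduct i1 i2 p1 p2),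
      (forall (a b : C) (f : Hom a b), exists (k : C) (m : Hom k a), is_kernel f m),
      (forall (a b : C) (f : Hom a b), exists (c : C) (e : Hom b c), is_cokernel f e)
    & (forall (a b : C) (m : Hom a b), is_mono m ->
          exists (c : C) (f : Hom b c), is_kernel f m) /\
      (forall (a b : C) (e : Hom a b), is_epi e ->
          exists (c : C) (f : Hom c a), is_cokernel f e)].

Definition is_iso (a b : C) (f : Hom a b) : Prop :=
  exists g : Hom b a, comp g f = idm a /\ comp f g = idm b.

Definition isomorphic (a b : C) : Prop := exists f : Hom a b, is_iso f.

Definition short_exact (a b c : C) (f : Hom a b) (g : Hom b c) : Prop :=
  is_kernel g f /\ is_cokernel f g.

End CatDefs.

Record Functor (C D : PreAdditiveCat) := {
  fobj :> C -> D;
  fmap : forall a b : C, Hom a b -> Hom (fobj a) (fobj b);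
  fmap1 : forall a : C, fmap (idm a) = idm (fobj a);
  fmapC : forall (a b c : C) (g : Hom b c) (f : Hom a b),
      fmap (comp g f) = comp (fmap g) (fmap f)
}.
Arguments fmap {C D} F {a b} f : rename.

Section FunctorDefs.
Variables C D E : PreAdditiveCat.

Definition exact_functor (F : Functor C D) : Prop :=
  forall (a b c : C) (f : Hom a b) (g : Hom b c),
    short_exact f g -> short_exact (fmap F f) (fmap F g).

Definition fully_faithful (F : Functor C D) : Prop :=
  forall a b : C, bijective (@fmap C D F a b).

Definition adjoint (F : Functor C D) (G : Functor D C) : Prop :=
  exists (eta : forall a : C, Hom a (G (F a))) (eps : forall b : D, Hom (F (G b)) b),
    [/\ forall (a a' : C) (f : Hom a a'),
          comp (eta a') f = comp (fmap G (fmap F f)) (eta a),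
        forall (b b' : D) (g : Hom b b'),
          comp g (eps b) = comp (eps b') (fmap F (fmap G g)),
        forall a : C, comp (eps (F a)) (fmap F (eta a)) = idm (F a)
      & forall b : D, comp (fmap G (eps b)) (eta (G b)) = idm (G b)].

Definition nat_iso (F G : Functor C D) : Prop :=
  exists alpha : forall a : C, Hom (F a) (G a),
    (forall a, is_iso (alpha a)) /\
    forall (a b : C) (f : Hom a b), comp (alpha b) (fmap F f) = comp (fmap G f) (alpha a).

End FunctorDefs.

Definition idF (C : PreAdditiveCat) : Functor C C :=
  @Build_Functor C C (fun a => a) (fun a b f => f) (fun a => erefl) (fun a b c g f => erefl).

Definition compF_fmap (C D E : PreAdditiveCat) (G : Functor D E) (F : Functor C D)
  (a b : C) (f : Hom a b) : Hom (G (F a)) (G (F b)) := fmap G (fmap F f).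

Lemma compF_fmap1 (C D E : PreAdditiveCat) (G : Functor D E) (F : Functor C D) (a : C) :
  compF_fmap G F (idm a) = idm (G (F a)).
Proof. by rewrite /compF_fmap !fmap1. Qed.

Lemma compF_fmapC (C D E : PreAdditiveCat) (G : Functor D E) (F : Functor C D)
  (a b c : C) (g : Hom b c) (f : Hom a b) :
  compF_fmap G F (comp g f) = comp (compF_fmap G F g) (compF_fmap G F f).
Proof. by rewrite /compF_fmap !fmapC. Qed.

Definition compF (C D E : PreAdditiveCat) (G : Functor D E) (F : Functor C D) :
  Functor C E :=
  @Build_Functor C E (fun a => G (F a)) (compF_fmap G F)
    (compF_fmap1 G F) (compF_fmapC G F).

(* Product category B x C (the direct sum B (+) C of additive categories) *)
Section ProdCat.
Variables B C : PreAdditiveCat.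
Definition pOb := (Ob B * Ob C)%type.
Definition pHom (x y : pOb) : zmodType := (Hom x.1 y.1 * Hom x.2 y.2)%type.
Definition pid (x : pOb) : pHom x x := (idm x.1, idm x.2).
Definition pcomp (x y z : pOb) (g : pHom y z) (f : pHom x y) : pHom x z :=
  (comp g.1 f.1, comp g.2 f.2).
Lemma pcompA x y z w (h : pHom z w) (g : pHom y z) (f : pHom x y) :
  pcomp h (pcomp g f) = pcomp (pcomp h g) f.
Proof. by rewrite /pcomp /= !compA. Qed.
Lemma pcomp1m x y (f : pHom x y) : pcomp (pid y) f = f.
Proof. by case: f => f1 f2; rewrite /pcomp /= !comp1m. Qed.
Lemma pcompm1 x y (f : pHom x y) : pcomp f (pid x) = f.
Proof. by case: f => f1 f2; rewrite /pcomp /= !compm1. Qed.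
Lemma pcompDl x y z (g g' : pHom y z) (f : pHom x y) :
  pcomp (g + g') f = pcomp g f + pcomp g' f.
Proof. by rewrite /pcomp /= !compDl. Qed.
Lemma pcompDr x y z (g : pHom y z) (f f' : pHom x y) :
  pcomp g (f + f') = pcomp g f + pcomp g f'.
Proof. by rewrite /pcomp /= !compDr. Qed.
Definition prodCat : PreAdditiveCat :=
  @Build_PreAdditiveCat pOb pHom pid pcomp pcompA pcomp1m pcompm1 pcompDl pcompDr.
End ProdCat.

Definition cat_equiv (C D : PreAdditiveCat) : Prop :=
  exists (F : Functor C D) (G : Functor D C),
    nat_iso (compF G F) (idF C) /\ nat_iso (compF F G) (idF D).

Definition recollement (A B C : PreAdditiveCat)
  (i_up_star : Functor A B) (i_low_star : Functor B A) (i_up_shriek : Functor A B)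
  (j_low_shriek : Functor C A) (j_up_star : Functor A C) (j_low_star : Functor C A) : Prop :=
  [/\ [/\ adjoint i_up_star i_low_star,
          adjoint i_low_star i_up_shriek,
          adjoint j_low_shriek j_up_star
        & adjoint j_up_star j_low_star],
      [/\ fully_faithful i_low_star, fully_faithful j_low_shriek
        & fully_faithful j_low_star]
    & forall a : A, (exists b : B, isomorphic a (i_low_star b)) <-> is_zero_obj (j_up_star a)].

(* Main.v *)
From Pilot Require Import Defs.
From mathcomp Require Import all_boot all_algebra.
From Stdlib Require Import IndefiniteDescription.
Import Pilot.Defs.
Set Implicit Arguments. Unset Strict Implicit. Unset Printing Implicit Defensive.
Import GRing.Theory.
Local Open Scope ring_scope.

Notation "g \oc f" := (comp g f) (at level 40, left associativity).

Lemma dchoice (T : Type) (P : T -> Type) (R : forall t, P t -> Prop) :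
  (forall t, exists x, R t x) -> exists f : forall t, P t, forall t, R t (f t).
Proof.
move=> H; exists (fun t => proj1_sig (constructive_indefinite_description _ (H t))).
by move=> t; case: (constructive_indefinite_description _ (H t)).
Qed.

Section Generic.
Variable C : PreAdditiveCat.
Implicit Types a b c x y z : C.

Lemma compm0 a b c (g : Hom b c) : g \oc (0 : Hom a b) = 0.
Proof. by apply: (addrI (g \oc 0)); rewrite -compDr !addr0. Qed.
Lemma comp0m a b c (f : Hom a b) : (0 : Hom b c) \oc f = 0.
Proof. by apply: (addrI (0 \oc f)); rewrite -compDl !addr0. Qed.
Lemma compBr a b c (g : Hom b c) (f f' : Hom a b) : g \oc (f - f') = g \oc f - g \oc f'.
Proof. by apply: (addIr (g \oc f')); rewrite -compDr !subrK. Qed.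
Lemma compBl a b c (g g' : Hom b c) (f : Hom a b) : (g - g') \oc f = g \oc f - g' \oc f.
Proof. by apply: (addIr (g' \oc f)); rewrite -compDl !subrK. Qed.

Lemma zeroP z : is_zero_obj z <-> idm z = 0.
Proof.
split=> [H|H a]; first by case: (H z) => _ /(_ (idm z) 0).
split=> f g.
  by rewrite -(comp1m f) -(comp1m g) H !comp0m.
by rewrite -(compm1 f) -(compm1 g) H !compm0.
Qed.

Lemma zero_to z a (f : Hom a z) : is_zero_obj z -> f = 0.
Proof. by case/(_ a) => H _; apply: H. Qed.
Lemma zero_from z a (f : Hom z a) : is_zero_obj z -> f = 0.
Proof. by case/(_ a) => _ H; apply: H. Qed.

Lemma iso_zero x z (f : Hom x z) : is_iso f -> is_zero_obj z -> is_zero_obj x.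
Proof.
case=> g [Hgf _] Hz; apply/zeroP; by rewrite -Hgf (zero_to f Hz) compm0.
Qed.

Lemma iso_zero' x z (f : Hom z x) : is_iso f -> is_zero_obj z -> is_zero_obj x.
Proof.
case=> g [_ Hfg] Hz; apply/zeroP; by rewrite -Hfg (zero_from f Hz) comp0m.
Qed.

Lemma iso_id a : is_iso (idm a).
Proof. by exists (idm a); rewrite comp1m. Qed.

Lemma inv_nat a a' b b' (f : Hom a b) (f' : Hom a' b') (fi : Hom b a) (fi' : Hom b' a')
  (g : Hom a a') (h : Hom b b') :
  f \oc fi = idm b -> fi' \oc f' = idm a' ->
  f' \oc g = h \oc f -> fi' \oc h = g \oc fi.
Proof.
move=> H2 H3 Hn.
by rewrite -[fi' \oc h]compm1 -H2 !compA -(compA fi') -Hn compA H3 comp1m.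
Qed.

Lemma monoP a b (m : Hom a b) :
  is_mono m <-> forall x (g : Hom x a), m \oc g = 0 -> g = 0.
Proof.
split=> [H x g Hg|H x g h Hgh].
  by apply: H; rewrite Hg compm0.
by apply/eqP; rewrite -subr_eq0; apply/eqP/H; rewrite compBr Hgh subrr.
Qed.

Lemma epiP a b (e : Hom a b) :
  is_epi e <-> forall x (g : Hom b x), g \oc e = 0 -> g = 0.
Proof.
split=> [H x g Hg|H x g h Hgh].
  by apply: H; rewrite Hg comp0m.
by apply/eqP; rewrite -subr_eq0; apply/eqP/H; rewrite compBl Hgh subrr.
Qed.

Lemma kernel_mono a b k (f : Hom a b) (m : Hom k a) : is_kernel f m -> is_mono m.
Proof.
case=> Hfm Hk x g h Hgh.
have [u [_ Hu]] := Hk x (m \oc g) ltac:(by rewrite compA Hfm comp0m).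
by rewrite -(Hu g erefl) (Hu h (esym Hgh)).
Qed.

Lemma cokernel_epi a b c (f : Hom a b) (e : Hom b c) : is_cokernel f e -> is_epi e.
Proof.
case=> Hef Hk x g h Hgh.
have [u [_ Hu]] := Hk x (g \oc e) ltac:(by rewrite -compA Hef compm0).
by rewrite -(Hu g erefl) (Hu h (esym Hgh)).
Qed.

Lemma mono0_zero a b (m : Hom a b) : is_mono m -> m = 0 -> is_zero_obj a.
Proof. by move=> Hm H0; apply/zeroP/Hm; rewrite H0 !comp0m. Qed.
Lemma epi0_zero a b (e : Hom a b) : is_epi e -> e = 0 -> is_zero_obj b.
Proof. by move=> Hm H0; apply/zeroP/Hm; rewrite H0 !compm0. Qed.

Lemma kernel_zero_iso a b k (f : Hom a b) (m : Hom k a) :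
  is_kernel f m -> is_zero_obj b -> is_iso m.
Proof.
move=> Hker Hb; have Hm := kernel_mono Hker; case: Hker => _ Hk.
have [h [Hh _]] := Hk a (idm a) (zero_to _ Hb).
exists h; split=> //; apply: Hm; by rewrite compA Hh comp1m compm1.
Qed.

Lemma iso_comp a b c (g : Hom b c) (f : Hom a b) : is_iso g -> is_iso f -> is_iso (g \oc f).
Proof.
case=> g' [H1 H2] [f' [H3 H4]]; exists (f' \oc g'); split.
  by rewrite -compA (compA g') H1 comp1m.
by rewrite -compA (compA f) H4 comp1m.
Qed.

Lemma iso_of_linv a b (f : Hom a b) (g : Hom b a) : is_iso g -> g \oc f = idm a -> is_iso f.
Proof.
case=> h [H1 H2] Hgf; exists g; split=> //.
by rewrite -[f \oc g]comp1m -H1 -!compA (compA g) Hgf comp1m.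
Qed.

Section Abelian.
Hypothesis Hab : is_abelian C.

Lemma epi_coker a b k (e : Hom a b) (m : Hom k a) :
  is_epi e -> is_kernel e m -> is_cokernel m e.
Proof.
move=> He [Hem Hk]; case: Hab => _ _ _ _ [_ Hepi].
have [c [f [Hef Hc]]] := Hepi _ _ e He.
split=> // x g Hgm.
have [t [Ht _]] := Hk _ f Hef.
apply: Hc; by rewrite -Ht compA Hgm comp0m.
Qed.

Lemma coim_mono a b k c (f : Hom a b) (km : Hom k a) (e : Hom a c) (v : Hom c b) :
  is_kernel f km -> is_cokernel km e -> v \oc e = f -> is_mono v.
Proof.
move=> [Hfk Hk] [Hek He] Hve.
have He_epi : is_epi e by exact: (cokernel_epi (conj Hek He)).
case: Hab => _ _ Hker Hcok _.
have [w0 [w Hw]] := Hker _ _ v.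
have [e0 [cc Hcc]] := Hcok _ _ w.
case: (Hw) => Hvw _; case: (Hcc) => Hcw Hcc'.
have [v' [Hv' _]] := Hcc' _ v Hvw.
have Hce : is_epi (cc \oc e).
  move=> x g h; rewrite !compA => /He_epi; exact: cokernel_epi Hcc _ _ _.
have [k2 [m2 Hm2]] := Hker _ _ (cc \oc e).
have Hcok2 := epi_coker Hce Hm2.
case: (Hm2) => Hcem2 _.
have [s [Hs _]] := Hk _ m2 ltac:(by rewrite -Hve -Hv' -!compA (compA cc) Hcem2 !compm0).
case: Hcok2 => _ Hu.
have [r [Hr _]] := Hu _ e ltac:(by rewrite -Hs compA Hek comp0m).
have Hrc : r \oc cc = idm c.
  by apply: He_epi; rewrite -compA Hr comp1m.
have Hw0 : w = 0 by rewrite -(comp1m w) -Hrc -compA Hcw compm0.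
apply/monoP => x g Hvg.
have [u [Hu' _]] := Hw.2 _ g Hvg.
by rewrite -Hu' Hw0 comp0m.
Qed.

End Abelian.
End Generic.

Section Func.
Variables (C D : PreAdditiveCat) (F : Functor C D).

Lemma fmap_iso a b (f : Hom a b) : is_iso f -> is_iso (fmap F f).
Proof.
case=> g [H1 H2]; exists (fmap F g); by rewrite -!fmapC H1 H2 !fmap1.
Qed.

Lemma fmap_zero_obj z : (forall x y, fmap F (0 : Hom x y) = 0) ->
  is_zero_obj z -> is_zero_obj (F z).
Proof. by move=> H0 /zeroP Hz; apply/zeroP; rewrite -fmap1 Hz H0. Qed.
End Func.

Section Adj.
#[local] Set Default Proof Using "All".
Variables (C D : PreAdditiveCat) (F : Functor C D) (G : Functor D C).
Variables (eta : forall a : C, Hom a (G (F a))) (eps : forall b : D, Hom (F (G b)) b).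
Hypothesis H1 : forall (a a' : C) (f : Hom a a'),
          comp (eta a') f = comp (fmap G (fmap F f)) (eta a).
Hypothesis H2 : forall (b b' : D) (g : Hom b b'),
          comp g (eps b) = comp (eps b') (fmap F (fmap G g)).
Hypothesis H3 : forall a : C, comp (eps (F a)) (fmap F (eta a)) = idm (F a).
Hypothesis H4 : forall b : D, comp (fmap G (eps b)) (eta (G b)) = idm (G b).

Lemma adjL x y (f : Hom (F x) y) : f = eps y \oc fmap F (fmap G f \oc eta x).
Proof. by rewrite fmapC compA -H2 -compA H3 compm1. Qed.

Lemma adjR x y (g : Hom x (G y)) : g = fmap G (eps y \oc fmap F g) \oc eta x.
Proof. by rewrite fmapC -compA -H1 compA H4 comp1m. Qed.

Lemma adjF0 : (exists z : C, is_zero_obj z) -> forall x y, fmap F (0 : Hom x y) = 0.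
Proof.
case=> z Hz x y.
have Hfz : forall w (u : Hom (F z) w), u = 0.
  move=> w u; rewrite (adjL u) (adjL (0 : Hom (F z) w)).
  by rewrite (zero_from (fmap G u \oc eta z) Hz) (zero_from (fmap G 0 \oc eta z) Hz).
have -> : (0 : Hom x y) = (0 : Hom z y) \oc (0 : Hom x z) by rewrite comp0m.
by rewrite fmapC (Hfz _ (fmap F 0)) comp0m.
Qed.

Lemma adjG0 : (exists z : D, is_zero_obj z) -> forall x y, fmap G (0 : Hom x y) = 0.
Proof.
case=> z Hz x y.
have Hgz : forall w (v : Hom w (G z)), v = 0.
  move=> w v; rewrite (adjR v) (adjR (0 : Hom w (G z))).
  by rewrite (zero_to (eps z \oc fmap F v) Hz) (zero_to (eps z \oc fmap F 0) Hz).
have -> : (0 : Hom x y) = (0 : Hom z y) \oc (0 : Hom x z) by rewrite comp0m.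
by rewrite fmapC (Hgz _ (fmap G 0)) compm0.
Qed.

Lemma adjGmono b b' (m : Hom b b') : is_mono m -> is_mono (fmap G m).
Proof.
move=> Hm x g h Hgh.
rewrite (adjR g) (adjR h); congr (_ \oc _); congr (fmap G _).
apply: Hm; by rewrite !compA !H2 -!compA -!fmapC Hgh.
Qed.

Lemma adjFepi a a' (e : Hom a a') : is_epi e -> is_epi (fmap F e).
Proof.
move=> He x g h Hgh.
rewrite (adjL g) (adjL h); congr (_ \oc _); congr (fmap F _).
apply: He; by rewrite -!compA !H1 !compA -!fmapC Hgh.
Qed.

Lemma counit_iso : fully_faithful G -> forall b, is_iso (eps b).
Proof.
move=> Hff b; case: (Hff b (F (G b))) => Gi HGi1 HGi2.
pose k := Gi (eta (G b)).
have Hk : fmap G k = eta (G b) by rewrite /k HGi2.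
exists k; split.
  rewrite H2 Hk; exact: H3.
case: (Hff b b) => Gj HGj _.
by rewrite -(HGj (eps b \oc k)) -(HGj (idm b)) fmapC Hk H4 fmap1.
Qed.

Lemma unit_iso : fully_faithful F -> forall a, is_iso (eta a).
Proof.
move=> Hff a; case: (Hff (G (F a)) a) => Fi HFi1 HFi2.
pose k := Fi (eps (F a)).
have Hk : fmap F k = eps (F a) by rewrite /k HFi2.
exists k; split.
  case: (Hff a a) => Fj HFj _.
  by rewrite -(HFj (k \oc eta a)) -(HFj (idm a)) fmapC Hk H3 fmap1.
rewrite H1 Hk; exact: H4.
Qed.

Lemma adjFeq a a' (e e' : Hom a a') : eta a' \oc e = eta a' \oc e' -> fmap F e = fmap F e'.
Proof.
move=> He; rewrite -(comp1m (fmap F e)) -(comp1m (fmap F e')) -H3 -!compA -!fmapC.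
by rewrite He.
Qed.

Lemma adjGeq b b' (e e' : Hom b b') : e \oc eps b = e' \oc eps b -> fmap G e = fmap G e'.
Proof.
move=> He; rewrite -(compm1 (fmap G e)) -(compm1 (fmap G e')) -H4 !compA -!fmapC.
by rewrite He.
Qed.

Lemma adjL_zero x y (f : Hom (F x) y) :
  (forall g : Hom x (G y), g = 0) -> (exists z : C, is_zero_obj z) -> f = 0.
Proof.
move=> Hg Hz; rewrite (adjL f) (Hg (fmap G f \oc eta x)) adjF0 // compm0 //.
Qed.

Lemma adjR_zero x y (g : Hom x (G y)) :
  (forall f : Hom (F x) y, f = 0) -> (exists z : D, is_zero_obj z) -> g = 0.
Proof.
move=> Hf Hz; rewrite (adjR g) (Hf (eps y \oc fmap F g)) adjG0 // comp0m //.
Qed.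

End Adj.

Section Recoll.
Variables (A B C : PreAdditiveCat) (I : Functor A B) (i : Functor B A) (S : Functor A B)
  (L : Functor C A) (J : Functor A C) (R : Functor C A).
Hypotheses (HA : is_abelian A) (HB : is_abelian B) (HC : is_abelian C).
Variables (etaI : forall a : A, Hom a (i (I a))) (epsI : forall b : B, Hom (I (i b)) b).
Hypothesis I1 : forall (a a' : A) (f : Hom a a'), comp (etaI a') f = comp (fmap i (fmap I f)) (etaI a).
Hypothesis I2 : forall (b b' : B) (g : Hom b b'), comp g (epsI b) = comp (epsI b') (fmap I (fmap i g)).
Hypothesis I3 : forall a : A, comp (epsI (I a)) (fmap I (etaI a)) = idm (I a).
Hypothesis I4 : forall b : B, comp (fmap i (epsI b)) (etaI (i b)) = idm (i b).
Variables (etaS : forall b : B, Hom b (S (i b))) (epsS : forall a : A, Hom (i (S a)) a).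
Hypothesis S1 : forall (a a' : B) (f : Hom a a'), comp (etaS a') f = comp (fmap S (fmap i f)) (etaS a).
Hypothesis S2 : forall (b b' : A) (g : Hom b b'), comp g (epsS b) = comp (epsS b') (fmap i (fmap S g)).
Hypothesis S3 : forall a : B, comp (epsS (i a)) (fmap i (etaS a)) = idm (i a).
Hypothesis S4 : forall b : A, comp (fmap S (epsS b)) (etaS (S b)) = idm (S b).
Variables (etaL : forall c : C, Hom c (J (L c))) (epsL : forall a : A, Hom (L (J a)) a).
Hypothesis L1 : forall (a a' : C) (f : Hom a a'), comp (etaL a') f = comp (fmap J (fmap L f)) (etaL a).
Hypothesis L2 : forall (b b' : A) (g : Hom b b'), comp g (epsL b) = comp (epsL b') (fmap L (fmap J g)).
Hypothesis L3 : forall a : C, comp (epsL (L a)) (fmap L (etaL a)) = idm (L a).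
Hypothesis L4 : forall b : A, comp (fmap J (epsL b)) (etaL (J b)) = idm (J b).
Variables (etaR : forall a : A, Hom a (R (J a))) (epsR : forall c : C, Hom (J (R c)) c).
Hypothesis R1 : forall (a a' : A) (f : Hom a a'), comp (etaR a') f = comp (fmap R (fmap J f)) (etaR a).
Hypothesis R2 : forall (b b' : C) (g : Hom b b'), comp g (epsR b) = comp (epsR b') (fmap J (fmap R g)).
Hypothesis R3 : forall a : A, comp (epsR (J a)) (fmap J (etaR a)) = idm (J a).
Hypothesis R4 : forall b : C, comp (fmap R (epsR b)) (etaR (R b)) = idm (R b).
Hypotheses (ffi : fully_faithful i) (ffL : fully_faithful L) (ffR : fully_faithful R).
Hypothesis Hiii : forall a : A, (exists b : B, isomorphic a (i b)) <-> is_zero_obj (J a).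
Hypotheses (exI : exact_functor I) (exS : exact_functor S).

Lemma zA : exists z : A, is_zero_obj z. Proof. by case: HA. Qed.
Lemma zB : exists z : B, is_zero_obj z. Proof. by case: HB. Qed.
Lemma zC : exists z : C, is_zero_obj z. Proof. by case: HC. Qed.
Lemma kerA : forall (a b : A) (f : Hom a b), exists (k : A) (m : Hom k a), is_kernel f m.
Proof. by case: HA. Qed.
Lemma cokA : forall (a b : A) (f : Hom a b), exists (c : A) (e : Hom b c), is_cokernel f e.
Proof. by case: HA. Qed.

Lemma I0 x y : fmap I (0 : Hom x y) = 0. Proof. exact: (adjF0 I1 I2 I3 I4 zA). Qed.
Lemma i0 x y : fmap i (0 : Hom x y) = 0. Proof. exact: (adjF0 S1 S2 S3 S4 zB). Qed.
Lemma S0 x y : fmap S (0 : Hom x y) = 0. Proof. exact: (adjG0 S1 S2 S3 S4 zA). Qed.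
Lemma L0 x y : fmap L (0 : Hom x y) = 0. Proof. exact: (adjF0 L1 L2 L3 L4 zC). Qed.
Lemma J0 x y : fmap J (0 : Hom x y) = 0. Proof. exact: (adjF0 R1 R2 R3 R4 zA). Qed.
Lemma R0 x y : fmap R (0 : Hom x y) = 0. Proof. exact: (adjG0 R1 R2 R3 R4 zC). Qed.

Lemma Jzero_i b : is_zero_obj (J (i b)).
Proof. apply/Hiii; exists b; exists (idm _); exact: iso_id. Qed.

Lemma hom_iR y c (g : Hom (i y) (R c)) : g = 0.
Proof.
apply: (adjR_zero R1 R2 R3 R4) zC => f; exact: zero_from (Jzero_i y).
Qed.

Lemma hom_Li c y (f : Hom (L c) (i y)) : f = 0.
Proof.
apply: (adjL_zero L1 L2 L3 L4) zC => g; exact: zero_to (Jzero_i y).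
Qed.

Lemma SRzero c : is_zero_obj (S (R c)).
Proof.
apply/zeroP; apply: (adjR_zero S1 S2 S3 S4) zA => f; exact: hom_iR.
Qed.

Lemma hom_Ri c y (f : Hom (R c) (i y)) : f = 0.
Proof.
have [K [k Hk]] := kerA f.
have [E [e He]] := cokA k.
have [v [Hv _]] := He.2 _ f Hk.1.
have Hvm := coim_mono HA Hk He Hv.
have HJv := adjGmono L1 L2 L3 L4 Hvm.
have HJE : is_zero_obj (J E).
  apply: (mono0_zero HJv); exact: zero_to (Jzero_i y).
have [y' [phi Hphi]] := (Hiii E).2 HJE.
have Hse : short_exact k e.
  split=> //; split; first exact: He.1.
  move=> x g Heg; apply: Hk.2; by rewrite -Hv -compA Heg compm0.
have HSe := cokernel_epi (exS Hse).2.
have HSE : is_zero_obj (S E).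
  apply: (epi0_zero HSe); exact: zero_from (SRzero c).
have HSi : is_zero_obj (S (i y')) := iso_zero' (fmap_iso S Hphi) HSE.
have Hy' : is_zero_obj y' := iso_zero (unit_iso S1 S2 S3 S4 ffi y') HSi.
have Hiy' : is_zero_obj (i y') := fmap_zero_obj (@i0) Hy'.
have HE : is_zero_obj E := iso_zero Hphi Hiy'.
by rewrite -Hv (zero_from v HE) comp0m.
Qed.

Lemma IRzero c : is_zero_obj (I (R c)).
Proof.
apply/zeroP; apply: (adjL_zero I1 I2 I3 I4) zA => g; exact: hom_Ri.
Qed.

Lemma Jeta_iso a : is_iso (fmap J (etaR a)).
Proof.
apply: (iso_of_linv (counit_iso R1 R2 R3 R4 ffR (J a))); exact: R3.
Qed.

Lemma epsS_mono a : is_mono (epsS a).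
Proof.
apply/monoP => x d Hd.
have [K [k Hk]] := kerA (epsS a).
have HJk := adjGmono L1 L2 L3 L4 (kernel_mono Hk).
have HJK : is_zero_obj (J K).
  apply: (mono0_zero HJk); exact: zero_to (Jzero_i _).
have [y [phi [phi' [Hp1 Hp2]]]] := (Hiii K).2 HJK.
case: (ffi y (S a)) => ii Hii1 Hii2.
have Hf : k \oc phi' = 0.
  rewrite -(Hii2 (k \oc phi')); set f0 := ii _.
  have Hf0 : epsS a \oc fmap i f0 = 0 by rewrite /f0 Hii2 compA Hk.1 comp0m.
  by rewrite (adjR S1 S2 S3 S4 f0) Hf0 S0 comp0m i0.
have Hk0 : k = 0 by rewrite -(compm1 k) -Hp1 compA Hf comp0m.
have [h [Hh _]] := Hk.2 _ d Hd.
by rewrite -Hh Hk0 comp0m.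
Qed.

Lemma etaR_epi a : is_epi (etaR a).
Proof.
apply/epiP => x g Hg.
have [Q [q Hq]] := cokA (etaR a).
have HJq := adjFepi R1 R2 R3 R4 (cokernel_epi Hq).
have HJq0 : fmap J q = 0.
  case: (Jeta_iso a) => t [Ht1 Ht2].
  by rewrite -(compm1 (fmap J q)) -Ht2 compA -fmapC Hq.1 J0 comp0m.
have HJQ : is_zero_obj (J Q) := epi0_zero HJq HJq0.
have [y [phi [phi' [Hp1 Hp2]]]] := (Hiii Q).2 HJQ.
have Hq0 : q = 0 by rewrite -(comp1m q) -Hp1 -compA (hom_Ri (phi \oc q)) compm0.
have [h [Hh _]] := Hq.2 _ g Hg.
by rewrite -Hh Hq0 compm0.
Qed.

Lemma epsS_ker a : is_kernel (etaR a) (epsS a).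
Proof.
split; first exact: hom_iR.
move=> x g Hg.
have Hm := @epsS_mono a.
suff [h Hh] : exists h, epsS a \oc h = g.
  by exists h; split=> // h' Hh'; apply: Hm; rewrite Hh Hh'.
have [K [k Hk]] := kerA (etaR a).
have HJk := adjGmono L1 L2 L3 L4 (kernel_mono Hk).
have HJk0 : fmap J k = 0.
  case: (Jeta_iso a) => t [Ht1 Ht2].
  by rewrite -(comp1m (fmap J k)) -Ht1 -compA -fmapC Hk.1 J0 compm0.
have HJK : is_zero_obj (J K) := mono0_zero HJk HJk0.
have [y [phi [phi' [Hp1 Hp2]]]] := (Hiii K).2 HJK.
have [h0 [Hh0 _]] := Hk.2 _ g Hg.
exists (fmap i (fmap S (k \oc phi') \oc etaS y) \oc phi \oc h0).
by rewrite !compA -(adjL S1 S2 S3 S4) -[k \oc phi' \oc phi]compA Hp1 compm1.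
Qed.

Lemma etaR_coker a : is_cokernel (epsS a) (etaR a).
Proof. exact (epi_coker HA (@etaR_epi a) (epsS_ker a)). Qed.

Lemma IepsS_iso a : is_iso (fmap I (epsS a)).
Proof.
have Hse : short_exact (epsS a) (etaR a) by split; [exact: epsS_ker | exact: etaR_coker].
exact: kernel_zero_iso (exI Hse).1 (IRzero _).
Qed.

Lemma decomp a : exists rt : (Hom a (i (S a)) * Hom (R (J a)) a)%type,
  [/\ rt.1 \oc epsS a = idm _, etaR a \oc rt.2 = idm _, rt.1 \oc rt.2 = 0
    & epsS a \oc rt.1 + rt.2 \oc etaR a = idm a].
Proof.
have [th [Ht1 Ht2]] := IepsS_iso a.
pose rho := fmap i (epsI (S a) \oc th) \oc etaI a.
have Hr : rho \oc epsS a = idm _.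
  by rewrite /rho -compA I1 compA -fmapC -compA Ht1 compm1 I4.
have [tau [Htau _]] := (etaR_coker a).2 _ (idm a - epsS a \oc rho)
  ltac:(by rewrite compBl comp1m -compA Hr compm1 subrr).
have He := @etaR_epi a.
exists (rho, tau); split=> /=.
- exact: Hr.
- apply: He; by rewrite -compA Htau comp1m compBr compm1 compA (epsS_ker a).1 comp0m subr0.
- apply: He; by rewrite -compA Htau comp0m compBr compm1 compA Hr comp1m subrr.
- by rewrite Htau addrC subrK.
Qed.


Definition rt a := proj1_sig (constructive_indefinite_description _ (decomp a)).
Definition rho a := (rt a).1.
Definition tau a := (rt a).2.
Lemma rt_spec a : [/\ rho a \oc epsS a = idm _, etaR a \oc tau a = idm _, rho a \oc tau a = 0
    & epsS a \oc rho a + tau a \oc etaR a = idm a].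
Proof. exact: (proj2_sig (constructive_indefinite_description _ (decomp a))). Qed.
Lemma rt1 a : rho a \oc epsS a = idm _. Proof. by case: (rt_spec a). Qed.
Lemma rt2 a : etaR a \oc tau a = idm _. Proof. by case: (rt_spec a). Qed.
Lemma rt3 a : rho a \oc tau a = 0. Proof. by case: (rt_spec a). Qed.
Lemma rt4 a : epsS a \oc rho a + tau a \oc etaR a = idm a. Proof. by case: (rt_spec a). Qed.
Lemma rt5 a : tau a \oc etaR a = idm a - epsS a \oc rho a.
Proof. by rewrite -(rt4 a) [epsS a \oc rho a + _]addrC addrK. Qed.

Lemma rho_nat a a' (f : Hom a a') : rho a' \oc f = fmap i (fmap S f) \oc rho a.
Proof.
apply/eqP; rewrite -subr_eq0; apply/eqP.
have HD : (rho a' \oc f - fmap i (fmap S f) \oc rho a) \oc epsS a = 0.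
  by rewrite compBl -!compA S2 (rt1 a) compm1 compA (rt1 a') comp1m subrr.
rewrite -[LHS]compm1 -(rt4 a) compDr !compA HD comp0m add0r.
by rewrite (hom_Ri (_ \oc tau a)) comp0m.
Qed.

Lemma tau_nat a a' (f : Hom a a') : f \oc tau a = tau a' \oc fmap R (fmap J f).
Proof.
apply: (@etaR_epi a).
rewrite -!compA -R1 (rt5 a) compA (rt5 a') compBr compBl compm1 comp1m.
rewrite -compA (rho_nat f).
by rewrite !compA S2.
Qed.


Lemma natIS : nat_iso I S.
Proof.
exists (fun a => epsI (S a) \oc fmap I (rho a)); split.
  move=> a; apply: iso_comp; first exact: (counit_iso I1 I2 I3 I4 ffi).
  exists (fmap I (epsS a)); split; last by rewrite -fmapC rt1 fmap1.
  rewrite -fmapC -fmap1; apply: (adjFeq I1 I2 I3 I4).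
  rewrite -(rt4 a) compDr [etaI a \oc (tau a \oc _)]compA.
  by rewrite (hom_Ri (etaI a \oc tau a)) comp0m addr0.
move=> a b f /=.
by rewrite -compA -fmapC rho_nat fmapC compA -I2 compA.
Qed.

Definition etaLinv c := proj1_sig (constructive_indefinite_description _ (unit_iso L1 L2 L3 L4 ffL c)).
Lemma etaLinv_spec c : etaLinv c \oc etaL c = idm _ /\ etaL c \oc etaLinv c = idm _.
Proof. exact: (proj2_sig (constructive_indefinite_description _ (unit_iso L1 L2 L3 L4 ffL c))). Qed.

Lemma natLR : nat_iso L R.
Proof.
exists (fun c => fmap R (etaLinv c) \oc etaR (L c)); split.
  move=> c; apply: iso_comp.
    apply: fmap_iso; exists (etaL c); case: (etaLinv_spec c) => H1 H2; by split.
  exists (tau (L c)); split; first by rewrite rt5 (hom_Li (rho (L c))) compm0 subr0.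
  exact: rt2.
move=> c c' g /=.
rewrite -compA R1 compA -fmapC.
have -> : etaLinv c' \oc fmap J (fmap L g) = g \oc etaLinv c.
  apply: inv_nat (etaLinv_spec c).2 (etaLinv_spec c').1 _; exact: L1.
by rewrite fmapC compA.
Qed.


Lemma bipA (a b : A) : exists t : {p : A & ((Hom a p * Hom b p) * (Hom p a * Hom p b))%type},
  is_biproduct (projT2 t).1.1 (projT2 t).1.2 (projT2 t).2.1 (projT2 t).2.2.
Proof.
case: HA => _ Hb _ _ _; have [p [i1 [i2 [p1 [p2 H]]]]] := Hb a b.
by exists (existT _ p ((i1, i2), (p1, p2))).
Qed.

Definition bpd (x : prodCat B C) := constructive_indefinite_description _ (bipA (i x.1) (R x.2)).
Definition Pob (x : prodCat B C) : A := projT1 (proj1_sig (bpd x)).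
Definition j1 x : Hom (i x.1) (Pob x) := (projT2 (proj1_sig (bpd x))).1.1.
Definition j2 x : Hom (R x.2) (Pob x) := (projT2 (proj1_sig (bpd x))).1.2.
Definition q1 x : Hom (Pob x) (i x.1) := (projT2 (proj1_sig (bpd x))).2.1.
Definition q2 x : Hom (Pob x) (R x.2) := (projT2 (proj1_sig (bpd x))).2.2.
Lemma bp_spec x : is_biproduct (j1 x) (j2 x) (q1 x) (q2 x).
Proof. exact: (proj2_sig (bpd x)). Qed.

Lemma qj11 x a (h : Hom a _) : q1 x \oc (j1 x \oc h) = h.
Proof. by case: (bp_spec x) => H _ _ _ _; rewrite compA H comp1m. Qed.
Lemma qj22 x a (h : Hom a _) : q2 x \oc (j2 x \oc h) = h.
Proof. by case: (bp_spec x) => _ H _ _ _; rewrite compA H comp1m. Qed.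
Lemma qj12 x a (h : Hom a _) : q1 x \oc (j2 x \oc h) = 0.
Proof. by case: (bp_spec x) => _ _ H _ _; rewrite compA H comp0m. Qed.
Lemma qj21 x a (h : Hom a _) : q2 x \oc (j1 x \oc h) = 0.
Proof. by case: (bp_spec x) => _ _ _ H _; rewrite compA H comp0m. Qed.
Lemma jqsum x : j1 x \oc q1 x + j2 x \oc q2 x = idm _.
Proof. by case: (bp_spec x). Qed.

Definition Gmap (x y : prodCat B C) (g : Hom x y) : Hom (Pob x) (Pob y) :=
  j1 y \oc fmap i g.1 \oc q1 x + j2 y \oc fmap R g.2 \oc q2 x.

Lemma Gmap1 x : Gmap (idm x) = idm (Pob x).
Proof. by rewrite /Gmap /= !fmap1 !compm1 jqsum. Qed.

Lemma GmapC x y z (g : Hom y z) (f : Hom x y) : Gmap (comp g f) = comp (Gmap g) (Gmap f).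
Proof.
rewrite /Gmap /= compDl !compDr -!compA !qj11 !qj22 !qj12 !qj21 !compm0 addr0 add0r.
by rewrite !fmapC !compA.
Qed.

Definition Gf : Functor (prodCat B C) A := Build_Functor Gmap1 GmapC.

Definition Fmap (a b : A) (f : Hom a b) : @Hom (prodCat B C) (S a, J a) (S b, J b) :=
  (fmap S f, fmap J f).
Lemma Fmap1 a : Fmap (idm a) = idm ((S a, J a) : prodCat B C).
Proof. by rewrite /Fmap !fmap1. Qed.
Lemma FmapC a b c (g : Hom b c) (f : Hom a b) : Fmap (comp g f) = comp (Fmap g) (Fmap f).
Proof. by rewrite /Fmap !fmapC. Qed.
Definition Ff : Functor A (prodCat B C) := Build_Functor Fmap1 FmapC.


Lemma q1G x y (g : Hom x y) : q1 y \oc Gmap g = fmap i g.1 \oc q1 x.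
Proof. by rewrite /Gmap compDr -!compA qj11 qj12 addr0. Qed.
Lemma q2G x y (g : Hom x y) : q2 y \oc Gmap g = fmap R g.2 \oc q2 x.
Proof. by rewrite /Gmap compDr -!compA qj22 qj21 add0r. Qed.

Lemma Sjq x : fmap S (j1 x \oc q1 x) = idm _.
Proof.
rewrite -fmap1; apply: (adjGeq S1 S2 S3 S4).
rewrite -(jqsum x) compDl -[j2 x \oc q2 x \oc _]compA (hom_iR (q2 x \oc _)) compm0 addr0.
by [].
Qed.

Lemma Jjq x : fmap J (j2 x \oc q2 x) = idm _.
Proof.
rewrite -fmap1; apply: (adjFeq R1 R2 R3 R4).
by rewrite -(jqsum x) compDr [etaR _ \oc (j1 x \oc _)]compA (hom_iR (etaR _ \oc j1 x)) comp0m add0r.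
Qed.

Definition etaSinv b := proj1_sig (constructive_indefinite_description _ (unit_iso S1 S2 S3 S4 ffi b)).
Lemma etaSinv_spec b : etaSinv b \oc etaS b = idm _ /\ etaS b \oc etaSinv b = idm _.
Proof. exact: (proj2_sig (constructive_indefinite_description _ (unit_iso S1 S2 S3 S4 ffi b))). Qed.

Lemma natGF : nat_iso (compF Gf Ff) (idF A).
Proof.
exists (fun a => epsS a \oc q1 (Ff a) + tau a \oc q2 (Ff a)); split.
  move=> a; exists (j1 (Ff a) \oc rho a + j2 (Ff a) \oc etaR a); split.
    rewrite compDl !compDr -!compA !(compA (rho a)) !(compA (etaR a)) rt1 rt3 (epsS_ker a).1 rt2.
    by rewrite !comp0m !compm0 addr0 add0r !comp1m jqsum.
  rewrite compDl !compDr -!compA !qj11 !qj22 !qj12 !qj21 !compm0 addr0 add0r.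
  exact: rt4.
move=> a b f /=; rewrite /compF_fmap /=.
rewrite compDl -!compA q1G q2G /= !compA -S2 -tau_nat.
by rewrite compDr !compA.
Qed.

Lemma natFG : nat_iso (compF Ff Gf) (idF (prodCat B C)).
Proof.
exists (fun x => ((etaSinv x.1 \oc fmap S (q1 x), epsR x.2 \oc fmap J (q2 x)) :
   @Hom (prodCat B C) (Ff (Gf x)) x)); split.
  move=> x; case: (counit_iso R1 R2 R3 R4 ffR x.2) => er [Her1 Her2].
  exists (fmap S (j1 x) \oc etaS x.1, fmap J (j2 x) \oc er).
  case: (etaSinv_spec x.1) => Hs1 Hs2.
  split; rewrite /= /pcomp /pid /=; congr (_, _).
  - by rewrite -compA (compA (etaS _)) Hs2 comp1m -fmapC Sjq.
  - by rewrite -compA (compA er) Her1 comp1m -fmapC Jjq.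
  - case: (bp_spec x) => Hq _ _ _ _.
    by rewrite -!compA (compA (fmap S (q1 x))) -fmapC Hq fmap1 comp1m Hs1.
  - case: (bp_spec x) => _ Hq _ _ _.
    by rewrite -!compA (compA (fmap J (q2 x))) -fmapC Hq fmap1 comp1m Her2.
move=> x y g /=; rewrite /pcomp /compF_fmap /=; congr (_, _).
  rewrite -compA -fmapC q1G fmapC compA [g.1 \oc _]compA; congr (_ \oc _).
  apply: inv_nat (etaSinv_spec x.1).2 (etaSinv_spec y.1).1 _; exact: S1.
by rewrite -compA -fmapC q2G fmapC compA -R2 compA.
Qed.

Lemma main_res : [/\ nat_iso I S, nat_iso L R & cat_equiv A (prodCat B C)].
Proof. split; [exact: natIS | exact: natLR | exists Ff, Gf; split; [exact: natGF | exact: natFG]]. Qed.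

End Recoll.

Theorem theorem1p1 (A B C : PreAdditiveCat)
  (i_up_star : Functor A B) (i_low_star : Functor B A) (i_up_shriek : Functor A B)
  (j_low_shriek : Functor C A) (j_up_star : Functor A C) (j_low_star : Functor C A) :
  is_abelian A -> is_abelian B -> is_abelian C ->
  recollement i_up_star i_low_star i_up_shriek j_low_shriek j_up_star j_low_star ->
  exact_functor i_up_star -> exact_functor i_up_shriek ->
  [/\ nat_iso i_up_star i_up_shriek,
      nat_iso j_low_shriek j_low_star
    & cat_equiv A (prodCat B C)].
Proof.
move=> HA HB HC [[[etaI [epsI [I1 I2 I3 I4]]] [etaS [epsS [S1 S2 S3 S4]]]
  [etaL [epsL [L1 L2 L3 L4]]] [etaR [epsR [R1 R2 R3 R4]]]] [ffi ffL ffR] Hiii] exI exS.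
exact: (main_res HA HB HC I1 I2 I3 I4 S1 S2 S3 S4 L1 L2 L3 L4 R1 R2 R3 R4 ffi ffL ffR Hiii exI exS).
Qed.
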